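(* Let $\mathcal{M}:R\to A_2B_2$ be a quantum channel with $B_2$ classical such that for every register $R'$ and every state $\omega_{RR'}$, $\rho_{A_2B_2R'}=\mathcal{M}(\omega_{RR'})$ satisfies $\rho_{B_2R'}=\rho_{B_2}\otimes\omega_{R'}$. Let $\omega_{A_1B_1R}$ be a state and $\rho_{A_1B_1A_2B_2}=\mathcal{M}(\omega_{A_1B_1R})$. Let $\nu_{A_1B_1A_2B_2}$ be any state with $\nu_{A_2B_2|A_1B_1}=\rho_{A_2B_2|A_1B_1}$ and $\mathrm{supp}(\nu_{A_1B_1})=\mathrm{supp}(\rho_{A_1B_1})$. Then there exists a state $\omega'_{A_1B_1R}$ with $\mathcal{M}(\omega'_{A_1B_1R})=\nu_{A_1B_1A_2B_2}$.
   Context: All spaces finite-dimensional. For a state $\rho_{XY}$, the conditional operator is $\rho_{X|Y}=\rho_Y^{-1/2}\rho_{XY}\rho_Y^{-1/2}$, with the inverse taken on the support of $\rho_Y$. Channels act as the identity on systems they do not act on. *)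

(* Defs.v *)
From HB Require Import structures.
From mathcomp Require Import all_boot all_order all_algebra.
From mathcomp Require Import mxtens.
Set Implicit Arguments.
Unset Strict Implicit.
Unset Printing Implicit Defensive.
Import Order.TTheory GRing.Theory Num.Theory.
Local Open Scope ring_scope.

Section Quantum.
Variable C : numClosedFieldType.

(* index of the basis vector |i> (x) |j> of C^m (x) C^n in C^(m*n) *)
Definition tidx m n (i : 'I_m) (j : 'I_n) : 'I_(m * n) := mxtens_index (i, j).
Definition fst_idx m n (k : 'I_(m * n)) : 'I_m := (mxtens_unindex k).1.
Definition snd_idx m n (k : 'I_(m * n)) : 'I_n := (mxtens_unindex k).2.

Definition adjmx m n (A : 'M[C]_(m, n)) : 'M[C]_(n, m) := map_mx Num.conj (A^T).

Definition psdmx n (A : 'M[C]_n) : Prop :=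
  adjmx A = A /\ forall v : 'rV[C]_n, 0 <= (v *m A *m adjmx v) 0 0.

Definition density n (A : 'M[C]_n) : Prop := psdmx A /\ \tr A = 1.

Definition ptrace1 m n (A : 'M[C]_(m * n)) : 'M[C]_n :=
  \matrix_(i, j) \sum_(k < m) A (tidx k i) (tidx k j).
Definition ptrace2 m n (A : 'M[C]_(m * n)) : 'M[C]_m :=
  \matrix_(i, j) \sum_(k < n) A (tidx i k) (tidx j k).
Definition ptrace_mid m k n (A : 'M[C]_(m * (k * n))) : 'M[C]_(m * n) :=
  \matrix_(p, q) \sum_(l < k)
     A (tidx (fst_idx p) (tidx l (snd_idx p)))
       (tidx (fst_idx q) (tidx l (snd_idx q))).

(* (id_k (x) Phi) for a map Phi : L(C^r) -> L(C^s), defined blockwise *)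
Definition blockmx k r (X : 'M[C]_(k * r)) (i j : 'I_k) : 'M[C]_r :=
  \matrix_(x, y) X (tidx i x) (tidx j y).
Definition idtens k r s (Phi : 'M[C]_r -> 'M[C]_s) (X : 'M[C]_(k * r))
  : 'M[C]_(k * s) :=
  \matrix_(p, q) Phi (blockmx X (fst_idx p) (fst_idx q)) (snd_idx p) (snd_idx q).

Definition channel r s (Phi : 'M[C]_r -> 'M[C]_s) : Prop :=
  [/\ (forall (a : C) (X Y : 'M[C]_r), Phi (a *: X + Y) = a *: Phi X + Phi Y),
      (forall k (X : 'M[C]_(k * r)), psdmx X -> psdmx (@idtens k r s Phi X)) &
      (forall X, \tr (Phi X) = \tr X)].

(* an operator on C^m (x) C^n is classical on the second factor: block
   diagonal w.r.t. the computational basis of the second factor *)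
Definition classical_snd m n (A : 'M[C]_(m * n)) : Prop :=
  forall (i j : 'I_m) (b b' : 'I_n), b != b' -> A (tidx i b) (tidx j b') = 0.

(* inverse square root of a PSD matrix, taken on its support *)
Definition inv_sqrt_supp n (Y : 'M[C]_n) : 'M[C]_n :=
  let P := spectralmx Y in
  let d := spectral_diag Y in
  invmx P *m diag_mx (\row_i (if d 0 i == 0 then 0 else (sqrtC (d 0 i))^-1)) *m P.

(* conditional operator rho_{X|Y} for rho_{YX} on C^m (x) C^n (Y first) *)
Definition cond_op m n (rho : 'M[C]_(m * n)) : 'M[C]_(m * n) :=
  let S := inv_sqrt_supp (ptrace2 rho) in
  (S *t (1%:M : 'M[C]_n)) *m rho *m (S *t (1%:M : 'M[C]_n)).

(* support (= range / column space) equality *)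
Definition same_supp n (A B : 'M[C]_n) : Prop := (A^T :=: B^T)%MS.

End Quantum.

(* Main.v *)
Require Import Defs.
From HB Require Import structures.
From mathcomp Require Import all_boot all_order all_algebra.
From mathcomp Require Import mxtens ring.
Import Order.TTheory GRing.Theory Num.Theory.
Local Open Scope ring_scope.

Section H.
Variable C : numClosedFieldType.

Lemma fst_tidx m n (i : 'I_m) (j : 'I_n) : fst_idx (tidx i j) = i.
Proof. by rewrite /fst_idx /tidx mxtens_indexK. Qed.
Lemma snd_tidx m n (i : 'I_m) (j : 'I_n) : snd_idx (tidx i j) = j.
Proof. by rewrite /snd_idx /tidx mxtens_indexK. Qed.

Lemma sum_tidx m n (F : 'I_(m*n) -> C) :
  \sum_k F k = \sum_i \sum_j F (tidx i j).
Proof.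
rewrite (reindex (@mxtens_index m n)); last first.
  by exists (@mxtens_unindex m n) => x _; rewrite ?mxtens_indexK ?mxtens_unindexK.
rewrite pair_big /=; apply: eq_bigr => -[i j] _ //.
Qed.

Lemma tensE m n p q (A : 'M[C]_(m, n)) (B : 'M[C]_(p, q)) i j k l :
  (A *t B) (tidx i j) (tidx k l) = A i k * B j l.
Proof. exact: tensmxE. Qed.

Lemma adjmxK m n (A : 'M[C]_(m, n)) : adjmx (adjmx A) = A.
Proof. by apply/matrixP => i j; rewrite !mxE conjCK. Qed.

Lemma adjmxM m n p (A : 'M[C]_(m, n)) (B : 'M[C]_(n, p)) :
  adjmx (A *m B) = adjmx B *m adjmx A.
Proof. by rewrite /adjmx trmx_mul map_mxM. Qed.

Lemma adjmxD m n (A B : 'M[C]_(m, n)) : adjmx (A + B) = adjmx A + adjmx B.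
Proof. by rewrite /adjmx linearD /= map_mxD. Qed.

Lemma adjmxZ m n a (A : 'M[C]_(m, n)) : adjmx (a *: A) = a^* *: adjmx A.
Proof. by rewrite /adjmx linearZ /= map_mxZ. Qed.

Lemma adjmxT m n p q (A : 'M[C]_(m, n)) (B : 'M[C]_(p, q)) :
  adjmx (A *t B) = adjmx A *t adjmx B.
Proof. by rewrite /adjmx trmx_tens map_mxT. Qed.

Lemma adjmx1 n : adjmx (1%:M : 'M[C]_n) = 1%:M.
Proof. by rewrite /adjmx trmx1 map_mx1. Qed.

Lemma adjmxE m n (A : 'M[C]_(m, n)) i j : adjmx A i j = (A j i)^*.
Proof. by rewrite !mxE. Qed.

Lemma mulT1l k r p (K : 'M[C]_k) (X : 'M[C]_(k * r, p)) i x q :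
  ((K *t (1%:M : 'M_r)) *m X) (tidx i x) q = \sum_j K i j * X (tidx j x) q.
Proof.
rewrite mxE sum_tidx; apply: eq_bigr => j _.
rewrite (bigD1 x) //= big1 => [|y /negbTE ne].
  by rewrite tensE mxE eqxx mulr1n mulr1 addr0.
by rewrite tensE mxE eq_sym ne mulr0n mulr0 mul0r.
Qed.

Lemma mulT1r k r p (L : 'M[C]_k) (X : 'M[C]_(p, k * r)) q j y :
  (X *m (L *t (1%:M : 'M_r))) q (tidx j y) = \sum_i L i j * X q (tidx i y).
Proof.
rewrite mxE sum_tidx; apply: eq_bigr => i _.
rewrite (bigD1 y) //= big1 => [|z /negbTE ne].
  by rewrite tensE mxE eqxx mulr1n mulr1 addr0 mulrC.
by rewrite tensE mxE ne mulr0n mulr0 mulr0.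
Qed.

Section Chan.
Variables (r s : nat) (M : 'M[C]_r -> 'M[C]_s).
Hypothesis Mlin : forall (a : C) (X Y : 'M[C]_r), M (a *: X + Y) = a *: M X + M Y.

Lemma M0 : M 0 = 0.
Proof. by have := Mlin (-1) 0 0; rewrite scaler0 add0r scaleN1r addNr. Qed.
Lemma MD X Y : M (X + Y) = M X + M Y.
Proof. by have := Mlin 1 X Y; rewrite !scale1r. Qed.
Lemma MZ a X : M (a *: X) = a *: M X.
Proof. by have := Mlin a X 0; rewrite !addr0 M0 addr0. Qed.
Lemma Msum (I : finType) (F : I -> 'M[C]_r) : M (\sum_i F i) = \sum_i M (F i).
Proof. exact: (big_morph M MD M0). Qed.

Lemma idtens_conj k (K L : 'M[C]_k) (X : 'M[C]_(k * r)) :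
  idtens M ((K *t 1%:M) *m X *m (L *t 1%:M)) =
  (K *t 1%:M) *m idtens M X *m (L *t 1%:M).
Proof.
have bl : forall i j, blockmx ((K *t 1%:M) *m X *m (L *t 1%:M)) i j =
   \sum_l \sum_k' (L l j * K i k') *: blockmx X k' l.
  move=> i j; apply/matrixP => x y; rewrite mxE mulT1r summxE.
  apply: eq_bigr => l _; rewrite mulT1l summxE mulr_sumr.
  by apply: eq_bigr => k' _; rewrite !mxE mulrA.
apply/matrixP => p q.
case: (mxtens_indexP p) => i x; case: (mxtens_indexP q) => j y.
rewrite -[mxtens_index (i, x)]/(tidx i x) -[mxtens_index (j, y)]/(tidx j y).
rewrite mulT1r [LHS]mxE !fst_tidx !snd_tidx bl Msum summxE.
apply: eq_bigr => l _; rewrite Msum summxE mulT1l mulr_sumr.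
by apply: eq_bigr => k' _; rewrite MZ !mxE !fst_tidx !snd_tidx mulrA.
Qed.

Hypothesis Mtr : forall X, \tr (M X) = \tr X.

Lemma idtens_tr k (X : 'M[C]_(k * r)) : \tr (idtens M X) = \tr X.
Proof.
rewrite /mxtrace !sum_tidx; apply: eq_bigr => i _.
have := Mtr (blockmx X i i); rewrite /mxtrace => E.
transitivity (\sum_x M (blockmx X i i) x x).
  by apply: eq_bigr => x _; rewrite !mxE !fst_tidx !snd_tidx.
by rewrite E; apply: eq_bigr => x _; rewrite !mxE.
Qed.

End Chan.
Lemma sum_delta n (F : 'I_n -> C) k : \sum_x F x * (x == k)%:R = F k.
Proof.
rewrite (bigD1 k) //= eqxx mulr1 big1 ?addr0 // => x /negbTE ->.
by rewrite mulr0.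
Qed.

Lemma psd_conj m n (A : 'M[C]_m) (B : 'M[C]_(n, m)) :
  psdmx A -> psdmx (B *m A *m adjmx B).
Proof.
move=> [hA hq]; split.
  by rewrite !adjmxM adjmxK hA mulmxA.
move=> v; have := hq (v *m B).
by rewrite adjmxM !mulmxA.
Qed.

Lemma adj_delta m n (i : 'I_m) (j : 'I_n) :
  adjmx (delta_mx i j : 'M[C]_(m, n)) = delta_mx j i.
Proof.
apply/matrixP => x y; rewrite !mxE; case: (x == j); case: (y == i) => //=;
by rewrite ?conjC1 ?conjC0.
Qed.

Lemma psd_diag m (A : 'M[C]_m) i : psdmx A -> 0 <= A i i.
Proof.
move=> [_ hq]; have := hq (delta_mx 0 i).
by rewrite adj_delta -rowE -colE !mxE.
Qed.

Lemma psd_zero m (A : 'M[C]_m) (v : 'rV[C]_m) :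
  psdmx A -> (v *m A *m adjmx v) 0 0 = 0 -> A *m adjmx v = 0.
Proof.
move=> [hA hq] hv.
have key : forall w : 'rV[C]_m, (w *m A *m adjmx v) 0 0 = 0.
  move=> w; set c := (w *m A *m adjmx v) 0 0.
  set a := (w *m A *m adjmx w) 0 0.
  have ha : 0 <= a by apply: hq.
  have hb : (v *m A *m adjmx w) 0 0 = c^*.
    rewrite /c -adjmxE !adjmxM adjmxK hA mulmxA //.
  have ha1 : 0 < a + 1 by rewrite ltr_wpDl // ltr01.
  set s := (a + 1)^-1.
  have hs : 0 < s by rewrite invr_gt0.
  have hsc : s^* = s by rewrite geC0_conj // ltW.
  have := hq (v + (- (c^* * s)) *: w).
  rewrite adjmxD adjmxZ !mulmxDl !mulmxDr -!scalemxAl -!scalemxAr.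
  have eD : forall X Y : 'M[C]_1, (X + Y) 0 0 = X 0 0 + Y 0 0 by move=> X Y; rewrite mxE.
  have eZ : forall b (X : 'M[C]_1), (b *: X) 0 0 = b * X 0 0 by move=> b X; rewrite mxE.
  rewrite !eD !eZ hv hb -/c -/a rmorphN rmorphM /= conjCK hsc.
  set N := c * c^*.
  have -> : 0 + (- (c * s)) * c^* + ((- (c^* * s)) * c + (- (c^* * s)) * ((- (c * s)) * a))
     = s * (N * (s * a - 2)).
    by rewrite /N; ring.
  rewrite pmulr_rge0 // => h1.
  have hsa : s * a < 2.
    apply: (le_lt_trans (y := 1)); last by rewrite (ltr_nat _ 1 2).
    by rewrite mulrC ler_pdivrMr // mul1r lerDl.
  have h2 : N * (s * a - 2) <= 0.
    by rewrite mulr_ge0_le0 ?mul_conjC_ge0 // subr_le0 ltW.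
  have /eqP : N * (s * a - 2) = 0 by apply/le_anti; rewrite h1 h2.
  rewrite mulf_eq0 subr_eq0 (lt_eqF hsa) orbF mul_conjC_eq0.
  by move/eqP.
apply/matrixP => i j; rewrite [j]ord1 [RHS]mxE.
by have := key (delta_mx 0 i); rewrite -mulmxA -rowE => <-; rewrite [RHS]mxE.
Qed.

Lemma psd_ptrace2 m n (A : 'M[C]_(m * n)) : psdmx A -> psdmx (ptrace2 A).
Proof.
move=> [hA hq]; split.
  apply/matrixP => i j; rewrite !mxE rmorph_sum; apply: eq_bigr => k _.
  by rewrite -{2}hA mxE mxE.
move=> v.
pose w k : 'rV[C]_(m * n) := \row_p (v 0 (fst_idx p) * (snd_idx p == k)%:R).
have -> : (v *m ptrace2 A *m adjmx v) 0 0 =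
          \sum_k (w k *m A *m adjmx (w k)) 0 0.
  rewrite !mxE.
  transitivity (\sum_k \sum_j \sum_i v 0 i * A (tidx i k) (tidx j k) * (v 0 j)^*).
    rewrite exchange_big; apply: eq_bigr => j _.
    rewrite !mxE mulr_suml exchange_big; apply: eq_bigr => i _.
    by rewrite !mxE mulr_sumr mulr_suml; apply: eq_bigr => k _.
  apply: eq_bigr => k _; rewrite !mxE sum_tidx; apply: eq_bigr => j _.
  under [RHS]eq_bigr => y _ do rewrite !mxE fst_tidx snd_tidx rmorphM /= conjC_nat.
  under [RHS]eq_bigr => y _ do rewrite mulrA.
  rewrite sum_delta sum_tidx mulr_suml; apply: eq_bigr => i _.
  rewrite mulr_suml.
  under [RHS]eq_bigr => x _ do rewrite mxE fst_tidx snd_tidx [_ * (_ == k)%:R]mulrC -!mulrA.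
  rewrite (bigD1 k) //= eqxx mul1r big1 ?addr0 ?mulrA // => x /negbTE ->.
  by rewrite mul0r.
by apply: sumr_ge0 => k _; apply: hq.
Qed.

Section Spec.
Variables (m : nat) (A : 'M[C]_m).
Local Notation P := (spectralmx A).
Local Notation d := (spectral_diag A).

Definition fmx (f : C -> C) : 'M[C]_m :=
  adjmx P *m diag_mx (\row_i f (d 0 i)) *m P.

Lemma P_adj : P *m adjmx P = 1%:M.
Proof. exact/unitarymxP/spectral_unitarymx. Qed.

Lemma adj_P : adjmx P *m P = 1%:M.
Proof.
have := invmx_unitary (spectral_unitarymx A) => E.
by rewrite /adjmx -E mulVmx ?spectral_unit.
Qed.

Lemma invP : invmx P = adjmx P.
Proof. exact: (invmx_unitary (spectral_unitarymx A)). Qed.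

Hypothesis hA : adjmx A = A.

Lemma A_spec : A = fmx id.
Proof.
have hn : A \is normalmx.
  by apply/normalmxP; move: hA; rewrite /adjmx => ->.
rewrite {1}(orthomx_spectralP hn) invP /fmx; congr (_ *m diag_mx _ *m _).
by apply/rowP => i; rewrite mxE.
Qed.

Lemma fmx_mul f g : fmx f *m fmx g = fmx (fun x => f x * g x).
Proof.
rewrite /fmx -!mulmxA (mulmxA P) P_adj mul1mx (mulmxA (diag_mx _)) mulmx_diag.
have -> : (\row_j ((\row_i f (d 0 i)) 0 j * (\row_i g (d 0 i)) 0 j)) =
  \row_i (f (d 0 i) * g (d 0 i)) by apply/rowP => i; rewrite !mxE.
by rewrite !mulmxA.
Qed.

Lemma fmx_adj f : adjmx (fmx f) = fmx (fun x => (f x)^*).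
Proof.
rewrite /fmx !adjmxM adjmxK mulmxA; congr (_ *m _ *m _).
by rewrite /adjmx tr_diag_mx map_diag_mx; congr diag_mx; apply/rowP => i; rewrite !mxE.
Qed.

Lemma fmx_ext f g : (forall i, f (d 0 i) = g (d 0 i)) -> fmx f = fmx g.
Proof.
by move=> h; rewrite /fmx; congr (_ *m diag_mx _ *m _); apply/rowP => i; rewrite !mxE h.
Qed.

Lemma fmx_herm f : (forall i, (f (d 0 i))^* = f (d 0 i)) -> adjmx (fmx f) = fmx f.
Proof. by move=> h; rewrite fmx_adj; apply: fmx_ext. Qed.

Lemma fmxD f g : fmx f + fmx g = fmx (fun x => f x + g x).
Proof.
rewrite /fmx -mulmxDl -mulmxDr; congr (_ *m _ *m _).
by apply/matrixP => i j; rewrite !mxE mulrnDl.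
Qed.

Lemma fmx1 : fmx (fun _ => 1) = 1%:M.
Proof.
rewrite /fmx; have -> : diag_mx (\row_i (1 : C)) = 1%:M :> 'M[C]_m.
  by apply/matrixP => i j; rewrite !mxE.
by rewrite mulmx1 adj_P.
Qed.


Lemma fmx0 : fmx (fun _ => 0) = 0.
Proof.
rewrite /fmx; have -> : diag_mx (\row_i (0 : C)) = 0 :> 'M[C]_m.
  by apply/matrixP => i j; rewrite !mxE mul0rn.
by rewrite mulmx0 mul0mx.
Qed.

Lemma spec_ge0 i : psdmx A -> 0 <= d 0 i.
Proof.
move=> hp; have := psd_diag _ _ i (psd_conj _ _ A P hp).
rewrite {2}A_spec /fmx !mulmxA P_adj mul1mx -mulmxA P_adj mulmx1.
by rewrite !mxE eqxx mulr1n.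
Qed.

End Spec.

Lemma adjmxN m n (A : 'M[C]_(m, n)) : adjmx (- A) = - adjmx A.
Proof. by rewrite /adjmx linearN /= map_mxN. Qed.

Lemma tensM1 k n (A B : 'M[C]_k) :
  (A *t (1%:M : 'M[C]_n)) *m (B *t 1%:M) = (A *m B) *t 1%:M.
Proof. by rewrite tensmx_mul mulmx1. Qed.

Lemma tens11 k n : (1%:M : 'M[C]_k) *t (1%:M : 'M[C]_n) = 1%:M.
Proof.
apply/matrixP => p q.
case: (mxtens_indexP p) => i x; case: (mxtens_indexP q) => j y.
rewrite tensmxE !mxE (inj_eq (can_inj (@mxtens_indexK k n))) xpair_eqE.
by case: (i == j); case: (x == y); rewrite ?mulr1 ?mulr0 ?mul1r ?mul0r.
Qed.

Lemma tensB1 k n (A B : 'M[C]_k) :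
  (A - B) *t (1%:M : 'M[C]_n) = A *t 1%:M - B *t 1%:M.
Proof. by apply/matrixP => p q; rewrite !mxE mulrBl. Qed.

Lemma tr_tens1 k n (X : 'M[C]_(k * n)) (Q : 'M[C]_k) :
  \tr (X *m (Q *t (1%:M : 'M[C]_n))) = \tr (ptrace2 X *m Q).
Proof.
rewrite /mxtrace sum_tidx; apply: eq_bigr => i _.
under eq_bigr => x _ do rewrite mulT1r.
rewrite exchange_big mxE; apply: eq_bigr => l _.
by rewrite mxE mulr_suml; apply: eq_bigr => x _; rewrite mulrC.
Qed.

Lemma proj_fix k n (nu : 'M[C]_(k * n)) (Q : 'M[C]_k) :
  psdmx nu -> adjmx Q = Q -> Q *m Q = Q -> ptrace2 nu *m Q = 0 ->
  ((1%:M - Q) *t (1%:M : 'M[C]_n)) *m nu *m ((1%:M - Q) *t 1%:M) = nu.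
Proof.
move=> hnu hQ hQQ hY.
set T := Q *t (1%:M : 'M[C]_n).
have hT : adjmx T = T by rewrite /T adjmxT hQ adjmx1.
have hTT : T *m T = T by rewrite /T tensM1 hQQ.
have hZ := psd_conj _ _ nu T hnu.
have trZ : \tr (T *m nu *m adjmx T) = 0.
  rewrite hT mxtrace_mulC mulmxA hTT mxtrace_mulC.
  by rewrite /T tr_tens1 hY mxtrace0.
have dZ : forall p, (T *m nu *m adjmx T) p p = 0.
  move=> p; move: trZ; rewrite /mxtrace => /psumr_eq0P; apply => // i _.
  exact: psd_diag.
have hnT : nu *m T = 0.
  apply/matrixP => i p.
  have := psd_zero _ nu (row p T) hnu.
  rewrite rowE adjmxM adj_delta hT.
  have -> : ((delta_mx 0 p : 'M[C]_(1, k * n)) *m T *m nu *m (T *m (delta_mx p 0 : 'M[C]_(k * n, 1)))) 0 0 = (T *m nu *m adjmx T) p p.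
    by rewrite hT mulmxA -colE -!mulmxA -rowE !mxE.
  move=> /(_ (dZ p)) /(congr1 (fun X : 'M[C]_(k * n, 1) => X i 0)).
  by rewrite mulmxA -colE !mxE.
have h1 : nu *m ((1%:M - Q) *t (1%:M : 'M[C]_n)) = nu.
  by rewrite tensB1 tens11 mulmxBr -/T hnT mulmx1 subr0.
rewrite -mulmxA h1.
have hnu' : adjmx nu = nu by case: hnu.
rewrite -{1}hnu' -{1}(adjmxK _ _ ((1%:M - Q) *t (1%:M : 'M[C]_n))) -adjmxM.
by rewrite adjmxT adjmx1 adjmxD adjmxN hQ adjmx1 h1.
Qed.

End H.

Arguments fmx {C m} A f.
Arguments invP {C m A}.
Arguments fmx_herm {C m A f}.
Arguments spec_ge0 {C m A}.
Arguments fmx_mul {C m A}.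
Arguments fmxD {C m A}.
Arguments fmx1 {C m A}.
Arguments fmx_ext {C m A f g}.
Arguments fmx0 {C m A}.
Arguments A_spec {C m A}.
Arguments idtens_conj {C r s M} Mlin {k}.
Arguments idtens_tr {C r s M} Mtr {k}.
Arguments tensM1 {C k n}.
Arguments psd_ptrace2 {C m n A}.
Arguments psd_conj {C m n A} B.
Arguments proj_fix {C k n nu Q}.

Theorem claimB4 (C : numClosedFieldType) (r a1 b1 a2 b2 : nat)
  (M : 'M[C]_r -> 'M[C]_(a2 * b2)) :
  channel M ->
  (forall X : 'M[C]_r, density X -> classical_snd (M X)) ->
  (forall (r' : nat) (om : 'M[C]_(r' * r)), density om ->
     let rho := idtens M om in
     ptrace_mid rho = ptrace2 om *t ptrace1 (ptrace1 rho)) ->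
  forall (om : 'M[C]_((a1 * b1) * r)), density om ->
  let rho := idtens M om in
  forall (nu : 'M[C]_((a1 * b1) * (a2 * b2))), density nu ->
  cond_op nu = cond_op rho ->
  same_supp (ptrace2 nu) (ptrace2 rho) ->
  exists om' : 'M[C]_((a1 * b1) * r), density om' /\ idtens M om' = nu.
Proof.
move=> [Mlin Mcp Mtr] _ _ om hom rho nu hnu hcond _.
have hrho : psdmx rho := Mcp _ om hom.1.
set Y := ptrace2 rho; set Yn := ptrace2 nu.
have hY : psdmx Y := psd_ptrace2 hrho.
have hYn : psdmx Yn := psd_ptrace2 hnu.1.
pose g (x : C) := if x == 0 then 0 else (sqrtC x)^-1.
have hg : forall x, 0 <= x -> 0 <= g x.
  by move=> x hx; rewrite /g; case: eqP => // _; rewrite invr_ge0 sqrtC_ge0.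
have eS : inv_sqrt_supp Y = fmx Y g by rewrite /inv_sqrt_supp /fmx invP.
have eSn : inv_sqrt_supp Yn = fmx Yn g by rewrite /inv_sqrt_supp /fmx invP.
have hYa : adjmx Y = Y by case: hY.
have hYna : adjmx Yn = Yn by case: hYn.
have hSa : adjmx (fmx Y g) = fmx Y g.
  by apply: fmx_herm => i; rewrite geC0_conj // hg // spec_ge0.
have hRa : adjmx (fmx Yn sqrtC) = fmx Yn sqrtC.
  by apply: fmx_herm => i; rewrite geC0_conj // sqrtC_ge0 spec_ge0.
pose q (x : C) := if x == 0 then 1 else 0 : C.
pose Q := fmx Yn q.
have hRS : fmx Yn sqrtC *m fmx Yn g = 1%:M - Q.
  have e : fmx Yn sqrtC *m fmx Yn g + Q = 1%:M.
    rewrite fmx_mul /Q fmxD -(fmx1 (A:=Yn)); apply: fmx_ext => i.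
    rewrite /g /q; case: eqP => [->|/eqP ne]; first by rewrite mulr0 add0r.
    by rewrite mulfV ?addr0 // sqrtC_eq0.
  by rewrite -e addrK.
have hSR : fmx Yn g *m fmx Yn sqrtC = 1%:M - Q.
  by rewrite fmx_mul -hRS fmx_mul; apply: fmx_ext => i; rewrite mulrC.
pose K := fmx Yn sqrtC *m fmx Y g.
pose om' := (K *t (1%:M : 'M[C]_r)) *m om *m adjmx (K *t 1%:M).
have e1 : idtens M om' = nu.
  rewrite /om' adjmxT adjmx1 (idtens_conj Mlin) -/rho /K adjmxM hSa hRa.
  rewrite -(tensM1 (fmx Yn sqrtC) (fmx Y g)) -(tensM1 (fmx Y g) (fmx Yn sqrtC)).
  have -> : forall X1 X2 X3 X4 X5 : 'M[C]_(a1 * b1 * (a2 * b2)),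
    X1 *m X2 *m X3 *m (X4 *m X5) = X1 *m (X2 *m X3 *m X4) *m X5.
    by move=> *; rewrite !mulmxA.
  have -> : (fmx Y g *t 1%:M) *m rho *m (fmx Y g *t 1%:M) = cond_op rho.
    by rewrite /cond_op -/Y eS.
  rewrite -hcond /cond_op -/Yn eSn !mulmxA tensM1 hRS -(mulmxA _ (fmx Yn g *t 1%:M)).
  rewrite tensM1 hSR.
  apply: proj_fix => //; first by case: hnu.
  - by rewrite /Q; apply: fmx_herm => i; rewrite /q; case: eqP; rewrite ?conjC1 ?conjC0.
  - by rewrite /Q fmx_mul; apply: fmx_ext => i; rewrite /q; case: eqP; rewrite ?mulr1 ?mulr0.
  - rewrite -/Yn {1}(A_spec hYna) /Q fmx_mul -(fmx0 (A:=Yn)); apply: fmx_ext => i.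
    by rewrite /q; case: eqP => [->|]; rewrite ?mulr1 ?mulr0.
exists om'; split => //; split.
  by rewrite /om'; apply: psd_conj; case: hom.
by rewrite -(idtens_tr Mtr) e1; case: hnu.
Qed.
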